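(* Let $M,N$ be finite-dimensional $\Pi$-modules. Then $\dim\operatorname{Ext}^1_\Pi(M,N)=\dim\operatorname{Coker}T_{M;N}+\dim\operatorname{Coker}T_{N;M}$. In particular, $\operatorname{Ext}^1_\Pi(M,N)=0$ if and only if both $T_{M;N}$ and $T_{N;M}$ are surjective.
   Context: $K$ is an algebraically closed field, $Q=(I,\Omega)$ a finite quiver without oriented cycles (so $KQ$ is finite-dimensional) and without loops, and $\Pi$ its preprojective algebra ($K\overline Q$ modulo the ideal generated by $\sum_{h\in\Omega}(hh^{op}-h^{op}h)$, where $\overline Q$ has arrows $\Omega\cup\{h^{op}\}$). Let $\tau$ be the Auslander–Reiten translation on finite-dimensional $KQ$-modules; equivalently $\tau=\epsilon\Phi^+$ where $\Phi^+$ is the Bernstein–Gelfand–Ponomarev Coxeter functor and $\epsilon$ is twisting by the automorphism of $KQ$ multiplying every arrow by $-1$. By Ringel, finite-dimensional $\Pi$-modules are equivalent to pairs $(M,\theta)$ with $M$ a $KQ$-module and $\theta\in\operatorname{Hom}_Q(M,\tau M)$ (a ''$\tau$-datum''), morphisms $(M,\theta)\to(N,\theta')$ being $f\in\operatorname{Hom}_Q(M,N)$ with $\theta'f=\tau(f)\theta$; here $M=\pi_Q(\cdot)$ is the restriction of the $\Pi$-module to $KQ\subseteq\Pi$. For $\Pi$-modules $M,N$ with $\tau$-data $\theta,\theta'$, define $T_{M;N}:\operatorname{Hom}_Q(\pi_QM,\pi_QN)\to\operatorname{Hom}_Q(\pi_QM,\tau\pi_QN)$ by $f\mapsto\tau(f)\circ\theta-\theta'\circ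 f$. *)

(* Defs.v *)
From HB Require Import structures.
From mathcomp Require Import all_boot all_order all_algebra.
Set Implicit Arguments. Unset Strict Implicit. Unset Printing Implicit Defensive.
Import Order.TTheory GRing.Theory Num.Theory.
Local Open Scope ring_scope.

Record quiver := Quiver {
  nV : nat;
  Arr : finType;
  src : Arr -> 'I_nV;
  tgt : Arr -> 'I_nV }.

Definition no_oriented_cycles (Q : quiver) : Prop :=
  forall (x : 'I_(nV Q)) (s : seq 'I_(nV Q)),
    path (fun a b => [exists h : Arr Q, (src h == a) && (tgt h == b)]) x s ->
    last x s = x -> s = [::].

Definition no_loops (Q : quiver) : Prop := forall h : Arr Q, src h != tgt h.

(* A finite-dimensional module over the preprojective algebra Pi of Q,
   i.e. a representation of the double quiver satisfying the relation
   sum_h (h h^op - h^op h) = 0.  It is given in a basis adapted to the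
   vertex decomposition M = (+)_i e_i M: [plab c] is the vertex of the
   c-th basis vector; matrices act on column vectors.
   [pX h] is the action of the arrow h (from e_{src h}M to e_{tgt h}M),
   [pY h] the action of h^op (from e_{tgt h}M to e_{src h}M).
   The underlying KQ-module pi_Q M is (pdim, plab, pX). *)
Record PiMod (K : fieldType) (Q : quiver) := PiModule {
  pdim : nat;
  plab : 'I_pdim -> 'I_(nV Q);
  pX : Arr Q -> 'M[K]_pdim;
  pY : Arr Q -> 'M[K]_pdim;
  pX_supp : forall h r c, pX h r c != 0 -> (plab r == tgt h) && (plab c == src h);
  pY_supp : forall h r c, pY h r c != 0 -> (plab r == src h) && (plab c == tgt h);
  prel : \sum_(h : Arr Q) (pX h *m pY h - pY h *m pX h) = 0 }.

Arguments plab {K Q} p _.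
Arguments pX {K Q} p _.
Arguments pY {K Q} p _.
Arguments pdim {K Q} p.

Section Defs.
Variables (K : fieldType) (Q : quiver) (M N : PiMod K Q).

Local Notation dM := (pdim M).
Local Notation dN := (pdim N).
Local Notation mx := 'M[K]_(dN, dM).

Definition mask (i j : 'I_(nV Q)) (F : mx) : mx :=
  \matrix_(r, c) (if (plab N r == j) && (plab M c == i) then 0 else F r c).

Definition mask_diag (F : mx) : mx :=
  \matrix_(r, c) (if plab N r == plab M c then 0 else F r c).

(* Hom_Q(pi_Q M, pi_Q N): vertex-preserving F with X^N_h F = F X^M_h. *)
Definition hom_obs (F : mx) : mx * {ffun Arr Q -> mx} :=
  (mask_diag F, [ffun h => pX N h *m F - F *m pX M h]).
Definition homQ : {vspace mx} := lker (linfun hom_obs).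

(* Ext^1_Pi(M,N), computed from extensions 0 -> N -> E -> M -> 0:
   E = N (+) M (vertexwise), arrows act by block matrices
   [[X^N_h, dX_h],[0, X^M_h]], [[Y^N_h, dY_h],[0, Y^M_h]].
   Cocycles: (dX,dY) with the right vertex support such that E satisfies
   the preprojective relation (only the off-diagonal block is nontrivial). *)
Definition ext_obs (d : {ffun Arr Q -> mx} * {ffun Arr Q -> mx}) :
  ({ffun Arr Q -> mx} * {ffun Arr Q -> mx}) * mx :=
  (([ffun h => mask (src h) (tgt h) (d.1 h)],
    [ffun h => mask (tgt h) (src h) (d.2 h)]),
   \sum_(h : Arr Q) (pX N h *m d.2 h + d.1 h *m pY M h
                      - pY N h *m d.1 h - d.2 h *m pX M h)).
Definition ext_cocycles := lker (linfun ext_obs).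

(* Split extensions (coboundaries): conjugation by [[1, F],[0,1]],
   F vertex-preserving. *)
Definition cob (F : mx) : {ffun Arr Q -> mx} * {ffun Arr Q -> mx} :=
  ([ffun h => pX N h *m F - F *m pX M h], [ffun h => pY N h *m F - F *m pY M h]).
Definition vdiag : {vspace mx} := lker (linfun mask_diag).
Definition ext_coboundaries := (linfun cob @: vdiag)%VS.

Definition dimExt1 : nat := (\dim ext_cocycles - \dim ext_coboundaries)%N.

(* Hom_Q(pi_Q M, tau pi_Q N), via Ringel's natural identification
   Hom_Q(M, tau N) = D Ext^1_Q(N, M): families g_h : e_{tgt h}M -> e_{src h}N
   with sum_h (g_h X^M_h - X^N_h g_h) = 0.  Under it the tau-datum theta of
   a Pi-module corresponds to (Y_h)_h. *)
Definition tau_obs (g : {ffun Arr Q -> mx}) : {ffun Arr Q -> mx} * mx :=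
  ([ffun h => mask (tgt h) (src h) (g h)],
   \sum_(h : Arr Q) (g h *m pX M h - pX N h *m g h)).
Definition HomTau : {vspace {ffun Arr Q -> mx}} := lker (linfun tau_obs).

(* T_{M;N}(f) = tau(f) o theta - theta' o f *)
Definition Tmap (F : mx) : {ffun Arr Q -> mx} :=
  [ffun h => F *m pY M h - pY N h *m F].

Definition imT : {vspace {ffun Arr Q -> mx}} := (linfun Tmap @: homQ)%VS.

Definition dimCokerT : nat := (\dim HomTau - \dim imT)%N.

Definition T_surjective : Prop := (HomTau <= imT)%VS.

End Defs.

(* Main.v *)
Require Import Defs.
From HB Require Import structures.
From mathcomp Require Import all_boot all_order all_algebra.
From mathcomp Require Import ring zify.
Set Implicit Arguments. Unset Strict Implicit. Unset Printing Implicit Defensive.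
Import GRing.Theory.
Local Open Scope ring_scope.
Import VectorInternalTheory.

Section Adj.
Variable K : fieldType.

Lemma lfun_app (aT rT : vectType K) (f : 'Hom(aT,rT)) x : f x = r2v (v2r x *m f2mx f).
Proof. by rewrite unlock. Qed.

Lemma dim_limg (aT rT : vectType K) (f : 'Hom(aT,rT)) : \dim (limg f) = \rank (f2mx f).
Proof.
rewrite unlock /dimv /= genmxE.
by rewrite (eqmxMr _ (genmxE _)) mul1mx.
Qed.

Definition bilin (U V : vectType K) (b : U -> V -> K) :=
  (forall u a x y, b u (a *: x + y) = a * b u x + b u y) /\
  (forall v a x y, b (a *: x + y) v = a * b x v + b y v).

Lemma bil0l (U V : vectType K) (b : U -> V -> K) : bilin b -> forall y, b 0 y = 0.
Proof.
case=> _ H y; have := H y 1 0 0; rewrite scale1r addr0 mul1r => E.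
by apply: (@addrI _ (b 0 y)); rewrite addr0 -E.
Qed.

Lemma bil0r (U V : vectType K) (b : U -> V -> K) : bilin b -> forall x, b x 0 = 0.
Proof.
case=> H _ x; have := H x 1 0 0; rewrite scale1r addr0 mul1r => E.
by apply: (@addrI _ (b x 0)); rewrite addr0 -E.
Qed.

Lemma bilsumL (U V : vectType K) (b : U -> V -> K) n (a : 'I_n -> K) (v : 'I_n -> U) y :
  bilin b -> b (\sum_i a i *: v i) y = \sum_i a i * b (v i) y.
Proof.
move=> hb; apply: (big_rec2 (fun s t => b s y = t)); first exact: bil0l.
by move=> i s t _ <-; case: hb => _ ->.
Qed.

Lemma bilsumR (U V : vectType K) (b : U -> V -> K) n (a : 'I_n -> K) (v : 'I_n -> V) x :
  bilin b -> b x (\sum_i a i *: v i) = \sum_i a i * b x (v i).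
Proof.
move=> hb; apply: (big_rec2 (fun s t => b x s = t)); first exact: bil0r.
by move=> i s t _ <-; case: hb => ->.
Qed.

Definition gram (U V : vectType K) (b : U -> V -> K) :=
  \matrix_(i, j) b (r2v (delta_mx 0 i)) (r2v (delta_mx 0 j)).

Lemma gramE (U V : vectType K) (b : U -> V -> K) x y : bilin b ->
  b (r2v x) (r2v y) = (x *m gram b *m y^T) 0 0.
Proof.
move=> hb.
have ex : r2v x = \sum_i x 0 i *: r2v (delta_mx 0 i : 'rV_(dim U)).
  by rewrite {1}[x]row_sum_delta linear_sum; apply: eq_bigr => i _; rewrite linearZ.
have ey : r2v y = \sum_i y 0 i *: r2v (delta_mx 0 i : 'rV_(dim V)).
  by rewrite {1}[y]row_sum_delta linear_sum; apply: eq_bigr => i _; rewrite linearZ.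
rewrite ex bilsumL //.
under eq_bigr do rewrite ey bilsumR //.
under eq_bigr do rewrite big_distrr.
rewrite exchange_big mxE; apply: eq_bigr => k _ /=.
rewrite !mxE big_distrl; apply: eq_bigr => i _ /=.
by rewrite !mxE -mulrA [y 0 k * _]mulrC.
Qed.

Lemma delta_entry m n (C : 'M[K]_(m, n)) i j :
  ((delta_mx 0 i : 'rV_m) *m C *m (delta_mx 0 j : 'rV_n)^T) 0 0 = C i j.
Proof. by rewrite trmx_delta -rowE -colE !mxE. Qed.

Lemma adj_dim (E E' F F' : vectType K) (f : 'Hom(E,F)) (g : 'Hom(F',E'))
  (bE : E -> E' -> K) (bF : F -> F' -> K) :
  bilin bE -> bilin bF ->
  (forall v, (forall u, bE u v = 0) -> v = 0) ->
  (forall u, (forall v, bF u v = 0) -> u = 0) ->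
  (forall u v, bF (f u) v = bE u (g v)) ->
  \dim (limg f) = \dim (limg g).
Proof.
move=> hE hF ndE ndF adj; rewrite !dim_limg.
have key : f2mx f *m gram bF = gram bE *m (f2mx g)^T.
  apply/matrixP => i j.
  have := adj (r2v (delta_mx 0 i)) (r2v (delta_mx 0 j)).
  rewrite !lfun_app !r2vK !gramE // trmx_mul !mulmxA => e.
  by rewrite -delta_entry !mulmxA e -[X in _ = X]delta_entry !mulmxA.
have fGF : row_free (gram bF).
  rewrite -kermx_eq0 -submx0; apply/rV_subP => v /sub_kermxP vG; rewrite submx0; apply/eqP.
  suff: r2v v = 0 by move/(congr1 v2r); rewrite r2vK linear0.
  by apply: ndF => w; rewrite -[w]v2rK gramE // vG !mul0mx mxE.
have fGE : row_free (gram bE)^T.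
  rewrite -kermx_eq0 -submx0; apply/rV_subP => v /sub_kermxP vG; rewrite submx0; apply/eqP.
  suff: r2v v = 0 by move/(congr1 v2r); rewrite r2vK linear0.
  have vG' : gram bE *m v^T = 0 by rewrite -[gram bE]trmxK -trmx_mul vG trmx0.
  by apply: ndE => w; rewrite -[w]v2rK gramE // -mulmxA vG' mulmx0 mxE.
rewrite -(mxrankMfree _ fGF) key -mxrank_tr trmx_mul trmxK.
by rewrite mxrankMfree.
Qed.
End Adj.

Section Gen.
Variable K : fieldType.

Lemma lfunE' (aT rT : vectType K) (f : aT -> rT) : linear f -> linfun f =1 f.
Proof.
move=> lf; pose fL : {linear aT -> rT} := HB.pack f (GRing.isLinear.Build _ _ _ _ f lf).
exact: (lfunE fL).
Qed.

Section LinComb.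
Variables (U V W : lmodType K).
Lemma lin_add (f g : U -> V) : linear f -> linear g -> linear (fun x => f x + g x).
Proof. by move=> hf hg a x y; rewrite hf hg scalerDr addrACA. Qed.
Lemma lin_sub (f g : U -> V) : linear f -> linear g -> linear (fun x => f x - g x).
Proof. by move=> hf hg a x y; rewrite hf hg scalerBr opprD addrACA. Qed.
Lemma lin_opp (f : U -> V) : linear f -> linear (fun x => - f x).
Proof. by move=> hf a x y; rewrite hf scalerN opprD. Qed.
Lemma lin_comp (f : U -> V) (g : V -> W) : linear f -> linear g -> linear (fun x => g (f x)).
Proof. by move=> hf hg a x y; rewrite hf hg. Qed.
Lemma lin_pair (f : U -> V) (g : U -> W) : linear f -> linear g -> linear (fun x => (f x, g x)).
Proof. by move=> hf hg a x y; rewrite hf hg. Qed.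
Lemma lin_fst : linear (fun x : V * W => x.1). Proof. by []. Qed.
Lemma lin_snd : linear (fun x : V * W => x.2). Proof. by []. Qed.
Lemma lin_sum (I : finType) (f : I -> U -> V) : (forall i, linear (f i)) ->
  linear (fun x => \sum_i f i x).
Proof.
move=> hf a x y; rewrite scaler_sumr -big_split /=.
by apply: eq_bigr => i _; rewrite hf.
Qed.
Lemma lin_ffun (I : finType) (f : I -> U -> V) : (forall i, linear (f i)) ->
  linear (fun x => [ffun i => f i x]).
Proof. by move=> hf a x y; apply/ffunP => i; rewrite !ffunE hf. Qed.
Lemma lin_app (I : finType) (i : I) : linear (fun x : {ffun I -> V} => x i).
Proof. by move=> a x y; rewrite !ffunE. Qed.
End LinComb.

Lemma lin_mull m n p (A : 'M[K]_(m, n)) : linear (fun F : 'M_(n, p) => A *m F).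
Proof. by move=> a x y; rewrite mulmxDr scalemxAr. Qed.
Lemma lin_mulr m n p (B : 'M[K]_(n, p)) : linear (fun F : 'M_(m, n) => F *m B).
Proof. by move=> a x y; rewrite mulmxDl scalemxAl. Qed.
Lemma lin_tr m n : linear (fun F : 'M[K]_(m, n) => F^T).
Proof. by move=> a x y; rewrite linearP. Qed.

Definition supp m n (P : 'I_m -> 'I_n -> bool) (A : 'M[K]_(m, n)) :=
  forall r c, ~~ P r c -> A r c = 0.

Definition kp m n (P : 'I_m -> 'I_n -> bool) (A : 'M[K]_(m, n)) :=
  \matrix_(r, c) (if P r c then A r c else 0).

Lemma lin_kp m n (P : 'I_m -> 'I_n -> bool) : linear (kp P).
Proof.
move=> a x y; apply/matrixP => r c; rewrite !mxE.
by case: (P r c); rewrite ?mulr0 ?addr0.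
Qed.

Lemma supp_kp m n (P : 'I_m -> 'I_n -> bool) A : supp P (kp P A).
Proof. by move=> r c nP; rewrite mxE (negbTE nP). Qed.

Lemma kp_id m n (P : 'I_m -> 'I_n -> bool) A : supp P A -> kp P A = A.
Proof.
move=> hA; apply/matrixP => r c; rewrite mxE.
by case: (boolP (P r c)) => // nP; rewrite hA.
Qed.

Lemma supp_mul m n p P1 P2 (P3 : 'I_m -> 'I_p -> bool) (A : 'M[K]_(m, n)) (B : 'M_(n, p)) :
  supp P1 A -> supp P2 B -> (forall r k c, P1 r k -> P2 k c -> P3 r c) ->
  supp P3 (A *m B).
Proof.
move=> hA hB h r c nP; rewrite mxE big1 // => k _.
case: (boolP (P1 r k)) => [p1|np1]; last by rewrite hA // mul0r.
case: (boolP (P2 k c)) => [p2|np2]; last by rewrite hB // mulr0.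
by move: nP; rewrite (h _ _ _ p1 p2).
Qed.

Lemma supp_add m n (P : 'I_m -> 'I_n -> bool) A B : supp P A -> supp P B -> supp P (A + B).
Proof. by move=> hA hB r c nP; rewrite mxE hA // hB // addr0. Qed.
Lemma supp_opp m n (P : 'I_m -> 'I_n -> bool) A : supp P A -> supp P (- A).
Proof. by move=> hA r c nP; rewrite mxE hA // oppr0. Qed.
Lemma supp_sub m n (P : 'I_m -> 'I_n -> bool) A B : supp P A -> supp P B -> supp P (A - B).
Proof. by move=> hA hB; apply: supp_add => //; apply: supp_opp. Qed.
Lemma supp0 m n (P : 'I_m -> 'I_n -> bool) : supp P 0.
Proof. by move=> r c _; rewrite mxE. Qed.
Lemma supp_sum m n (P : 'I_m -> 'I_n -> bool) (I : finType) (A : I -> 'M_(m, n)) :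
  (forall i, supp P (A i)) -> supp P (\sum_i A i).
Proof.
move=> hA; apply: (big_rec (supp P)); first exact: supp0.
by move=> i B _ hB; apply: supp_add.
Qed.

Lemma tr_entry m n (A : 'M[K]_(m, n)) (B : 'M_(n, m)) :
  \tr (A *m B) = \sum_r \sum_c A r c * B c r.
Proof. by rewrite /mxtrace; apply: eq_bigr => r _; rewrite mxE. Qed.

Lemma tr_eq m n (A A' : 'M[K]_(m, n)) (B B' : 'M_(n, m)) :
  (forall r c, A r c * B c r = A' r c * B' c r) -> \tr (A *m B) = \tr (A' *m B').
Proof.
move=> h; rewrite !tr_entry; apply: eq_bigr => r _; apply: eq_bigr => c _; exact: h.
Qed.

Lemma tr_delta m n (A : 'M[K]_(m, n)) r c : \tr (A *m delta_mx c r) = A r c.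
Proof.
rewrite tr_entry (bigD1 r) //= (bigD1 c) //= !mxE !eqxx mulr1.
rewrite big1 ?addr0; last by move=> c' hc; rewrite mxE (negbTE hc) mulr0.
rewrite big1 ?addr0 // => r' hr; rewrite big1 // => c' _.
by rewrite mxE (negbTE hr) andbF mulr0.
Qed.

End Gen.

Section Conc.
Variables (K : fieldType) (Q : quiver).
Implicit Types M N : PiMod K Q.

Local Notation mx M N := 'M[K]_(pdim N, pdim M).
Local Notation fam M N := {ffun Arr Q -> mx M N}.

Lemma lin_app1 (V W : lmodType K) (h : Arr Q) : linear (fun d : {ffun Arr Q -> V} * W => d.1 h).
Proof. by move=> a x y; rewrite /= !ffunE. Qed.
Lemma lin_app2 (V W : lmodType K) (h : Arr Q) : linear (fun d : W * {ffun Arr Q -> V} => d.2 h).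
Proof. by move=> a x y; rewrite /= !ffunE. Qed.

Lemma lin_mask M N i j : linear (@Defs.mask K Q M N i j).
Proof.
move=> a x y; apply/matrixP => r c; rewrite !mxE.
by case: ifP; rewrite ?mulr0 ?addr0.
Qed.
Lemma lin_maskd M N : linear (@mask_diag K Q M N).
Proof.
move=> a x y; apply/matrixP => r c; rewrite !mxE.
by case: ifP; rewrite ?mulr0 ?addr0.
Qed.

Ltac lin_atom := first
  [ exact: (lin_comp (lin_app1 _) (lin_mull _))
  | exact: (lin_comp (lin_app1 _) (lin_mulr _))
  | exact: (lin_comp (lin_app2 _) (lin_mull _))
  | exact: (lin_comp (lin_app2 _) (lin_mulr _))
  | exact: (lin_comp (lin_app _) (lin_mull _))
  | exact: (lin_comp (lin_app _) (lin_mulr _))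
  | exact: (lin_comp (lin_app1 _) (lin_mask _ _))
  | exact: (lin_comp (lin_app2 _) (lin_mask _ _))
  | exact: (lin_comp (lin_app _) (lin_mask _ _))
  | exact: (lin_comp (lin_app1 _) (lin_kp _))
  | exact: (lin_comp (lin_app2 _) (lin_kp _))
  | exact: (lin_comp (lin_app _) (lin_kp _))
  | exact: lin_mull | exact: lin_mulr | exact: lin_maskd | exact: lin_kp ].

Ltac lin := repeat first
  [ lin_atom
  | apply: lin_pair | apply: lin_sub | apply: lin_add | apply: lin_opp
  | apply: lin_sum => ? | apply: lin_ffun => ? ].

Lemma lin_ext M N : linear (@ext_obs K Q M N).
Proof. rewrite /ext_obs; lin. Qed.
Local Unset Implicit Arguments.

Lemma lin_tau M N : linear (@tau_obs K Q M N).
Proof. rewrite /tau_obs; lin. Qed.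
Lemma lin_hom M N : linear (@hom_obs K Q M N).
Proof. rewrite /hom_obs; lin. Qed.
Lemma lin_cob M N : linear (@cob K Q M N).
Proof. rewrite /cob; lin. Qed.
Lemma lin_Tmap M N : linear (@Tmap K Q M N).
Proof. rewrite /Tmap; lin. Qed.

Definition PX M N (h : Arr Q) := fun (r : 'I_(pdim N)) (c : 'I_(pdim M)) =>
  (plab N r == tgt h) && (plab M c == src h).
Definition PY M N (h : Arr Q) := fun (r : 'I_(pdim N)) (c : 'I_(pdim M)) =>
  (plab N r == src h) && (plab M c == tgt h).
Definition PD M N := fun (r : 'I_(pdim N)) (c : 'I_(pdim M)) => plab N r == plab M c.

Definition relm M N (d : fam M N * fam M N) := (@ext_obs K Q M N d).2.
Definition mPm M N (d : fam M N * fam M N) := (@ext_obs K Q M N d).1.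
Definition alpham M N (g : fam M N) := (@tau_obs K Q M N g).2.
Definition mYm M N (g : fam M N) := (@tau_obs K Q M N g).1.
Definition hxm M N (F : mx M N) := (@hom_obs K Q M N F).2.
Definition keepX M N (g : fam M N) := [ffun h => kp (PX M N h) (g h)].
Definition keepY M N (g : fam M N) := [ffun h => kp (PY M N h) (g h)].
Definition p1 M N (d : fam M N * fam M N) := (keepX M N d.1, keepY M N d.2).
Definition pdiag M N (F : mx M N) := kp (PD M N) F.
Definition S1 M N := lker (linfun (mPm M N)).
Definition S2 M N := lker (linfun (mYm M N)).

Lemma lin_relm M N : linear (relm M N). Proof. by move=> a x y; rewrite /relm lin_ext. Qed.
Lemma lin_mPm M N : linear (mPm M N). Proof. by move=> a x y; rewrite /mPm lin_ext. Qed.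
Lemma lin_alpham M N : linear (alpham M N). Proof. by move=> a x y; rewrite /alpham lin_tau. Qed.
Lemma lin_mYm M N : linear (mYm M N). Proof. by move=> a x y; rewrite /mYm lin_tau. Qed.
Lemma lin_hxm M N : linear (hxm M N). Proof. by move=> a x y; rewrite /hxm lin_hom. Qed.
Lemma lin_keepX M N : linear (keepX M N). Proof. rewrite /keepX; lin. Qed.
Lemma lin_keepY M N : linear (keepY M N). Proof. rewrite /keepY; lin. Qed.
Lemma lin_p1 M N : linear (p1 M N).
Proof.
by move=> a x y; rewrite /p1 /= lin_keepX lin_keepY.
Qed.
Lemma lin_pdiag M N : linear (pdiag M N). Proof. exact: lin_kp. Qed.

Lemma suppX N h : supp (PX N N h) (pX N h).
Proof. by move=> r c; apply: contraNeq; exact: pX_supp. Qed.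
Lemma suppY N h : supp (PY N N h) (pY N h).
Proof. by move=> r c; apply: contraNeq; exact: pY_supp. Qed.

Lemma mask0P M N i j (F : mx M N) :
  Defs.mask i j F = 0 <-> supp (fun r c => (plab N r == j) && (plab M c == i)) F.
Proof.
split => [h r c np | hF].
  by have := congr1 (fun A : mx M N => A r c) h; rewrite !mxE (negbTE np).
apply/matrixP => r c; rewrite !mxE; case: ifP => // np.
by apply: hF; rewrite np.
Qed.

Lemma maskd0P M N (F : mx M N) : mask_diag F = 0 <-> supp (PD M N) F.
Proof.
split => [h r c np | hF].
  by have := congr1 (fun A : mx M N => A r c) h; move: np; rewrite /PD => np; rewrite !mxE (negbTE np).
apply/matrixP => r c; rewrite !mxE; case: ifP => // np.
by apply: hF; rewrite /PD np.
Qed.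

Lemma cobX_supp M N (F : mx M N) h : supp (PD M N) F ->
  supp (PX M N h) (pX N h *m F - F *m pX M h).
Proof.
move=> hF; apply: supp_sub.
  apply: (supp_mul (suppX N h) hF) => r k c /andP[/eqP e1 /eqP e2] /eqP e3.
  by rewrite /PX e1 -e3 e2 !eqxx.
apply: (supp_mul hF (suppX M h)) => r k c /eqP e1 /andP[/eqP e2 /eqP e3].
by rewrite /PX e1 e2 e3 !eqxx.
Qed.

Lemma cobY_supp M N (F : mx M N) h : supp (PD M N) F ->
  supp (PY M N h) (pY N h *m F - F *m pY M h).
Proof.
move=> hF; apply: supp_sub.
  apply: (supp_mul (suppY N h) hF) => r k c /andP[/eqP e1 /eqP e2] /eqP e3.
  by rewrite /PY e1 -e3 e2 !eqxx.
apply: (supp_mul hF (suppY M h)) => r k c /eqP e1 /andP[/eqP e2 /eqP e3].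
by rewrite /PY e1 e2 e3 !eqxx.
Qed.

Lemma rel_supp M N (d : fam M N * fam M N) :
  (forall h, supp (PX M N h) (d.1 h)) -> (forall h, supp (PY M N h) (d.2 h)) ->
  supp (PD M N) (relm M N d).
Proof.
move=> h1 h2; apply: supp_sum => h; repeat apply: supp_sub; try apply: supp_add.
- apply: (supp_mul (suppX N h) (h2 h)) => r k c /andP[/eqP e1 /eqP e2] /andP[/eqP e3 /eqP e4].
  by rewrite /PD e1 e4.
- apply: (supp_mul (h1 h) (suppY M h)) => r k c /andP[/eqP e1 /eqP e2] /andP[/eqP e3 /eqP e4].
  by rewrite /PD e1 e4.
- apply: (supp_mul (suppY N h) (h1 h)) => r k c /andP[/eqP e1 /eqP e2] /andP[/eqP e3 /eqP e4].
  by rewrite /PD e1 e4.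
- apply: (supp_mul (h2 h) (suppX M h)) => r k c /andP[/eqP e1 /eqP e2] /andP[/eqP e3 /eqP e4].
  by rewrite /PD e1 e4.
Qed.

Lemma alpha_supp M N (g : fam M N) :
  (forall h, supp (PY M N h) (g h)) -> supp (PD M N) (alpham M N g).
Proof.
move=> hg; apply: supp_sum => h; apply: supp_sub.
- apply: (supp_mul (hg h) (suppX M h)) => r k c /andP[/eqP e1 /eqP e2] /andP[/eqP e3 /eqP e4].
  by rewrite /PD e1 e4.
- apply: (supp_mul (suppX N h) (hg h)) => r k c /andP[/eqP e1 /eqP e2] /andP[/eqP e3 /eqP e4].
  by rewrite /PD e1 e4.
Qed.

Lemma memS1 M N d : d \in S1 M N <->
  (forall h, supp (PX M N h) (d.1 h)) /\ (forall h, supp (PY M N h) (d.2 h)).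
Proof.
rewrite /S1 memv_ker lfunE'; last exact: lin_mPm.
split => [/eqP e | [h1 h2]].
  split => h.
    by have := congr1 (fun p : fam M N * fam M N => p.1 h) e; rewrite /= !ffunE => /mask0P.
  by have := congr1 (fun p : fam M N * fam M N => p.2 h) e; rewrite /= !ffunE => /mask0P.
apply/eqP; rewrite /mPm /=; congr (_, _); apply/ffunP => h; rewrite !ffunE;
  apply/mask0P; [exact: h1 | exact: h2].
Qed.

Lemma memS2 M N g : g \in S2 M N <-> (forall h, supp (PY M N h) (g h)).
Proof.
rewrite /S2 memv_ker lfunE'; last exact: lin_mYm.
split => [/eqP e | h2].
  by move=> h; have := congr1 (fun p : fam M N => p h) e; rewrite /= !ffunE => /mask0P.
by apply/eqP; apply/ffunP => h; rewrite !ffunE; apply/mask0P; exact: h2.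
Qed.

Lemma memvdiag M N F : F \in vdiag M N <-> supp (PD M N) F.
Proof.
rewrite /vdiag memv_ker lfunE'; last exact: lin_maskd.
by split => [/eqP/maskd0P | /maskd0P/eqP].
Qed.

Arguments memS1 {M N d}.
Arguments memS2 {M N g}.
Arguments memvdiag {M N F}.

Lemma limg_p1 M N : limg (linfun (p1 M N)) = S1 M N.
Proof.
apply/vspaceP => d; apply/idP/idP => [/memv_imgP [e _ ->] | hd].
  rewrite lfunE'; last exact: lin_p1.
  by apply/memS1; split => h; rewrite /= ffunE; apply: supp_kp.
apply/memv_imgP; exists d; rewrite ?memvf // lfunE'; last exact: lin_p1.
case/memS1: hd; case: d => d1 d2 /= h1 h2.
by rewrite /p1 /=; congr (_, _); apply/ffunP => h; rewrite ffunE kp_id.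
Qed.

Lemma limg_keepY M N : limg (linfun (keepY M N)) = S2 M N.
Proof.
apply/vspaceP => d; apply/idP/idP => [/memv_imgP [e _ ->] | hd].
  rewrite lfunE'; last exact: lin_keepY.
  by apply/memS2 => h; rewrite ffunE; apply: supp_kp.
apply/memv_imgP; exists d; rewrite ?memvf // lfunE'; last exact: lin_keepY.
move/memS2: hd => h2.
by apply/ffunP => h; rewrite ffunE kp_id.
Qed.

Lemma limg_pdiag M N : limg (linfun (pdiag M N)) = vdiag M N.
Proof.
apply/vspaceP => d; apply/idP/idP => [/memv_imgP [e _ ->] | hd].
  rewrite lfunE'; last exact: lin_pdiag.
  by apply/memvdiag; apply: supp_kp.
apply/memv_imgP; exists d; rewrite ?memvf // lfunE'; last exact: lin_pdiag.
by move/memvdiag: hd => h2; rewrite /pdiag kp_id.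
Qed.

Definition trf m n (A : 'M[K]_(m, n)) (B : 'M_(n, m)) := \tr (A *m B).
Definition fb M N (u : fam M N) (v : fam N M) := \sum_h \tr (u h *m v h).
Definition pb M N (d : fam M N * fam M N) (e : fam N M * fam N M) :=
  \sum_h (\tr (d.1 h *m e.2 h) - \tr (d.2 h *m e.1 h)).

Lemma bilin_trf m n : bilin (@trf m n).
Proof.
split => [u a x y | v a x y]; rewrite /trf.
  by rewrite mulmxDr -scalemxAr mxtraceD mxtraceZ.
by rewrite mulmxDl -scalemxAl mxtraceD mxtraceZ.
Qed.

Lemma bilin_fb M N : bilin (fb M N).
Proof.
split => [u a x y | v a x y]; rewrite /fb big_distrr -big_split /=;
  apply: eq_bigr => h _; rewrite !ffunE.
  by rewrite mulmxDr -scalemxAr mxtraceD mxtraceZ.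
by rewrite mulmxDl -scalemxAl mxtraceD mxtraceZ.
Qed.

Lemma bilin_pb M N : bilin (pb M N).
Proof.
split => [u a x y | v a x y]; rewrite /pb big_distrr -big_split /=;
  apply: eq_bigr => h _; rewrite !ffunE.
  rewrite !mulmxDr -!scalemxAr !mxtraceD !mxtraceZ mulrBr; ring.
rewrite !mulmxDl -!scalemxAl !mxtraceD !mxtraceZ mulrBr; ring.
Qed.

Definition dfam m n (h : Arr Q) (A : 'M[K]_(m, n)) : {ffun Arr Q -> 'M_(m, n)} :=
  [ffun h' => if h' == h then A else 0].
Arguments dfam {m n}.
Arguments trf {m n}.

Lemma sum_dfamL m n h (A : 'M[K]_(m, n)) (B : {ffun Arr Q -> 'M_(n, m)}) :
  \sum_h' \tr (dfam h A h' *m B h') = \tr (A *m B h).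
Proof.
rewrite (bigD1 h) //= big1 ?addr0; first by rewrite ffunE eqxx.
by move=> h' hh; rewrite ffunE (negbTE hh) mul0mx mxtrace0.
Qed.

Lemma nd_trf m n (u : 'M[K]_(m, n)) : (forall v, trf u v = 0) -> u = 0.
Proof. by move=> h; apply/matrixP => r c; rewrite mxE -tr_delta; apply: h. Qed.

Lemma nd_fb M N (v : fam N M) : (forall u, fb M N u v = 0) -> v = 0.
Proof.
move=> hv; apply/ffunP => h; apply/matrixP => r c; rewrite !ffunE mxE.
have := hv (dfam h (delta_mx c r)); rewrite /fb sum_dfamL mxtrace_mulC tr_delta.
by [].
Qed.

Lemma nd_pb M N (e : fam N M * fam N M) : (forall d, pb M N d e = 0) -> e = 0.
Proof.
move=> he; case: e he => e1 e2 he; congr (_, _).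
  apply/ffunP => h; apply/matrixP => r c; rewrite !ffunE mxE.
  have := he (0, dfam h (delta_mx c r)); rewrite /pb /= sumrB.
  rewrite sum_dfamL big1 ?sub0r; last by move=> h' _; rewrite ffunE mul0mx mxtrace0.
  by rewrite mxtrace_mulC tr_delta => /eqP; rewrite oppr_eq0 => /eqP.
apply/ffunP => h; apply/matrixP => r c; rewrite !ffunE mxE.
have := he (dfam h (delta_mx c r), 0); rewrite /pb /= sumrB.
rewrite sum_dfamL [X in _ - X]big1 ?subr0; last by move=> h' _; rewrite ffunE mul0mx mxtrace0.
by rewrite mxtrace_mulC tr_delta.
Qed.

Lemma tr_kp m n (P : 'I_m -> 'I_n -> bool) (P' : 'I_n -> 'I_m -> bool)
  (A : 'M[K]_(m, n)) B :
  (forall r c, P' c r -> P r c) -> supp P' B -> \tr (kp P A *m B) = \tr (A *m B).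
Proof.
move=> hP hB; apply: tr_eq => r c; rewrite mxE.
case: (boolP (P r c)) => // nP; rewrite hB ?mulr0 //.
by apply: contra nP; exact: hP.
Qed.

Lemma tr_pd m n (P : 'I_m -> 'I_n -> bool) (P' : 'I_n -> 'I_m -> bool)
  (A : 'M[K]_(m, n)) B :
  (forall r c, P r c -> P' c r) -> supp P A -> \tr (A *m B) = \tr (A *m kp P' B).
Proof.
move=> hP hA; apply: tr_eq => r c; rewrite mxE.
case: (boolP (P' c r)) => // nP; rewrite hA ?mul0r //.
by apply: contra nP; exact: hP.
Qed.

Lemma adj_rel M N d (G : mx N M) :
  trf (relm M N d) G = pb M N d (@cob K Q N M G).
Proof.
rewrite /trf /relm /pb /= mulmx_suml raddf_sum; apply: eq_bigr => h _.
rewrite !ffunE.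
have t1 : \tr (pX N h *m d.2 h *m G) = \tr (d.2 h *m G *m pX N h)
  by rewrite -mulmxA mxtrace_mulC.
have t2 : \tr (pY N h *m d.1 h *m G) = \tr (d.1 h *m G *m pY N h)
  by rewrite -mulmxA mxtrace_mulC.
rewrite !mulmxDl !mulNmx !raddfD !raddfN /= t1 t2.
rewrite !mulmxA; ring.
Qed.

Lemma adj_alpha M N g (G : mx N M) :
  trf (alpham M N g) G = fb M N g (hxm N M G).
Proof.
rewrite /trf /alpham /fb /= mulmx_suml raddf_sum; apply: eq_bigr => h _.
rewrite !ffunE.
have t1 : \tr (pX N h *m g h *m G) = \tr (g h *m G *m pX N h)
  by rewrite -mulmxA mxtrace_mulC.
rewrite !mulmxDl !mulNmx !raddfD !raddfN /= t1.
rewrite !mulmxA; ring.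
Qed.

Lemma PD_sym M N r c : PD M N r c -> PD N M c r.
Proof. by rewrite /PD eq_sym. Qed.

Lemma dimA1 M N : \dim (linfun (relm M N) @: S1 M N) = \dim (ext_coboundaries N M).
Proof.
have l1 : linear (fun d => relm M N (p1 M N d)) := lin_comp (lin_p1 M N) (lin_relm M N).
have l2 : linear (fun G => @cob K Q N M (pdiag N M G)) := lin_comp (lin_pdiag N M) (lin_cob N M).
have e1 : (linfun (relm M N) @: S1 M N = limg (linfun (fun d => relm M N (p1 M N d))))%VS.
  rewrite -limg_p1 -limg_comp; congr lfun_img; apply/lfunP => d.
  by rewrite comp_lfunE (lfunE' l1) (lfunE' (lin_relm M N)) (lfunE' (lin_p1 M N)).
have e2 : ext_coboundaries N M = limg (linfun (fun G => @cob K Q N M (pdiag N M G))).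
  rewrite /ext_coboundaries -limg_pdiag -limg_comp; congr lfun_img; apply/lfunP => d.
  by rewrite comp_lfunE (lfunE' l2) (lfunE' (lin_cob N M)) (lfunE' (lin_pdiag N M)).
rewrite e1 e2; apply: (@adj_dim _ _ _ _ _ _ _ (pb M N) trf).
- exact: bilin_pb.
- exact: bilin_trf.
- exact: nd_pb.
- exact: nd_trf.
move=> u v; rewrite (lfunE' l1) (lfunE' l2).
rewrite /trf (@tr_pd _ _ (PD M N) (PD N M)); last 2 first.
- exact: PD_sym.
- by apply: rel_supp => h; rewrite /= ffunE; apply: supp_kp.
rewrite -/(trf _ _) -/(pdiag N M v) adj_rel /pb; apply: eq_bigr => h _ /=.
have hv : supp (PD N M) (pdiag N M v) by apply: supp_kp.
rewrite !ffunE (@tr_kp _ _ _ (PY N M h)) ?(@tr_kp _ _ _ (PX N M h)) //.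
- by move=> r c; rewrite /PX /PY andbC.
- exact: cobX_supp.
- by move=> r c; rewrite /PX /PY andbC.
- exact: cobY_supp.
Qed.

Lemma dimA2 M N :
  \dim (linfun (alpham M N) @: S2 M N) = \dim (linfun (hxm N M) @: vdiag N M).
Proof.
have l1 : linear (fun d => alpham M N (keepY M N d)) := lin_comp (lin_keepY M N) (lin_alpham M N).
have l2 : linear (fun G => hxm N M (pdiag N M G)) := lin_comp (lin_pdiag N M) (lin_hxm N M).
have e1 : (linfun (alpham M N) @: S2 M N = limg (linfun (fun d => alpham M N (keepY M N d))))%VS.
  rewrite -limg_keepY -limg_comp; congr lfun_img; apply/lfunP => d.
  by rewrite comp_lfunE (lfunE' l1) (lfunE' (lin_alpham M N)) (lfunE' (lin_keepY M N)).
have e2 : (linfun (hxm N M) @: vdiag N M = limg (linfun (fun G => hxm N M (pdiag N M G))))%VS.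
  rewrite -limg_pdiag -limg_comp; congr lfun_img; apply/lfunP => d.
  by rewrite comp_lfunE (lfunE' l2) (lfunE' (lin_hxm N M)) (lfunE' (lin_pdiag N M)).
rewrite e1 e2; apply: (@adj_dim _ _ _ _ _ _ _ (fb M N) trf).
- exact: bilin_fb.
- exact: bilin_trf.
- exact: nd_fb.
- exact: nd_trf.
move=> u v; rewrite (lfunE' l1) (lfunE' l2).
rewrite /trf (@tr_pd _ _ (PD M N) (PD N M)); last 2 first.
- exact: PD_sym.
- by apply: alpha_supp => h; rewrite ffunE; apply: supp_kp.
rewrite -/(trf _ _) -/(pdiag N M v) adj_alpha /fb; apply: eq_bigr => h _ /=.
have hv : supp (PD N M) (pdiag N M v) by apply: supp_kp.
rewrite !ffunE (@tr_kp _ _ _ (PX N M h)) //.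
- by move=> r c; rewrite /PX /PY andbC.
- exact: cobX_supp.
Qed.

Lemma pair_eq0 (V W : vectType K) (x : V * W) : (x == 0) = (x.1 == 0) && (x.2 == 0).
Proof. by case: x. Qed.

Lemma lker_pair (V W1 W2 : vectType K) (f : V -> W1 * W2) : linear f ->
  lker (linfun f) = (lker (linfun (fun x => (f x).1)) :&: lker (linfun (fun x => (f x).2)))%VS.
Proof.
move=> lf; have l1 : linear (fun x => (f x).1) by move=> a x y; rewrite lf.
have l2 : linear (fun x => (f x).2) by move=> a x y; rewrite lf.
apply/vspaceP => x; rewrite memv_cap !memv_ker (lfunE' lf) (lfunE' l1) (lfunE' l2).
exact: pair_eq0.
Qed.

Arguments lker_pair {V W1 W2 f}.
Arguments pair_eq0 {V W}.

Lemma E1 M N : ext_cocycles M N = (S1 M N :&: lker (linfun (relm M N)))%VS.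
Proof. by rewrite /ext_cocycles (lker_pair (@lin_ext M N)). Qed.

Lemma E4 M N : HomTau M N = (S2 M N :&: lker (linfun (alpham M N)))%VS.
Proof. by rewrite /HomTau (lker_pair (lin_tau M N)). Qed.

Lemma E5 M N : homQ M N = (vdiag M N :&: lker (linfun (hxm M N)))%VS.
Proof. by rewrite /homQ (lker_pair (lin_hom M N)). Qed.

Lemma E6 M N : (vdiag M N :&: lker (linfun (@cob K Q M N)))%VS =
  (homQ M N :&: lker (linfun (@Tmap K Q M N)))%VS.
Proof.
apply/vspaceP => F; rewrite /homQ /vdiag !memv_cap !memv_ker.
rewrite (lfunE' (@lin_maskd M N)) (lfunE' (lin_cob M N)) (lfunE' (lin_hom M N)).
rewrite (lfunE' (lin_Tmap M N)).
have eT : Tmap F = - (@cob K Q M N F).2 by apply/ffunP => h; rewrite !ffunE opprB.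
rewrite eT oppr_eq0 !pair_eq0 /=.
by rewrite andbA.
Qed.

Lemma supp_tr m n (P : 'I_m -> 'I_n -> bool) (P' : 'I_n -> 'I_m -> bool) (A : 'M[K]_(m, n)) :
  (forall c r, P' c r = P r c) -> supp P A -> supp P' A^T.
Proof. by move=> e hA c r nP; rewrite mxE hA // -e. Qed.

Arguments supp_tr {m n P P' A}.

Lemma E7 M N : \dim (S1 M N) = (\dim (S2 M N) + \dim (S2 N M))%N.
Proof.
pose snd2 := fun d : fam M N * fam M N => d.2.
pose tr1 := fun d : fam M N * fam M N => [ffun h => (d.1 h)^T] : fam N M.
have ls : linear snd2 by [].
have lt : linear tr1.
  by move=> a x y; apply/ffunP => h; rewrite /tr1 !ffunE linearP.
set U := (S1 M N :&: lker (linfun snd2))%VS.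
have k := limg_ker_dim (linfun snd2) (S1 M N).
have ea : (linfun snd2 @: S1 M N)%VS = S2 M N.
  apply/vspaceP => x; apply/idP/idP => [/memv_imgP [d hd ->] | hx].
    by rewrite (lfunE' ls); case/memS1: hd => _ h2; apply/memS2.
  apply/memv_imgP; exists (0, x); last by rewrite (lfunE' ls).
  by apply/memS1; split => h /=; [rewrite ffunE; apply: supp0 | exact: (iffLR memS2 hx h)].
have eb : \dim (linfun tr1 @: U)%VS = \dim U.
  apply: limg_dim_eq; apply/eqP; rewrite -subv0; apply/subvP => x.
  rewrite /U !memv_cap !memv_ker (lfunE' ls) (lfunE' lt) memv0 => /andP[/andP[_ x2] x1].
  case: x x1 x2 => x1 x2 /= e1 e2; rewrite pair_eq0 /= e2 andbT.
  apply/eqP/ffunP => h; move/eqP/ffunP: e1 => /(_ h); rewrite !ffunE => e.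
  by rewrite -[x1 h]trmxK e trmx0.
have ec : (linfun tr1 @: U)%VS = S2 N M.
  apply/vspaceP => x; apply/idP/idP => [/memv_imgP [d hd ->] | hx].
    rewrite (lfunE' lt); move: hd; rewrite /U memv_cap => /andP[/memS1 [h1 _] _].
    apply/memS2 => h; rewrite ffunE; apply: (supp_tr _ (h1 h)).
    by move=> c r; rewrite /PX /PY andbC.
  apply/memv_imgP; exists ([ffun h => (x h)^T], 0).
    rewrite /U memv_cap memv_ker (lfunE' ls) /snd2 /= eqxx andbT.
    apply/memS1; split => h /=; rewrite ffunE; last by apply: supp0.
    move/memS2: hx => hx; apply: (supp_tr _ (hx h)).
    by move=> c r; rewrite /PX /PY andbC.
  by rewrite (lfunE' lt); apply/ffunP => h; rewrite /tr1 !ffunE trmxK.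
by rewrite -k ea -eb ec addnC.
Qed.

Lemma rel_cob M N (F : mx M N) : relm M N (@cob K Q M N F) = 0.
Proof.
rewrite /relm /ext_obs /cob /=.
have -> : \sum_h (pX N h *m [ffun h0 => pY N h0 *m F - F *m pY M h0] h +
       [ffun h0 => pX N h0 *m F - F *m pX M h0] h *m pY M h -
       pY N h *m [ffun h0 => pX N h0 *m F - F *m pX M h0] h -
       [ffun h0 => pY N h0 *m F - F *m pY M h0] h *m pX M h) =
  \sum_h ((pX N h *m pY N h - pY N h *m pX N h) *m F -
          F *m (pX M h *m pY M h - pY M h *m pX M h)).
  apply: eq_bigr => h _; rewrite !ffunE.
  rewrite ?(mulmxDr, mulmxDl, mulmxN, mulNmx, mulmxA).
  by apply/matrixP => r c; rewrite !mxE; ring.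
by rewrite sumrB -mulmx_suml -mulmx_sumr !prel mul0mx mulmx0 subrr.
Qed.

Lemma alpha_T M N (F : mx M N) : hxm M N F = 0 -> alpham M N (@Tmap K Q M N F) = 0.
Proof.
move=> hF.
have e h : pX N h *m F = F *m pX M h.
  by apply/eqP; rewrite -subr_eq0; move/ffunP: hF => /(_ h); rewrite !ffunE => ->.
rewrite /alpham /tau_obs /Tmap /=.
have -> : \sum_h ([ffun h0 => F *m pY M h0 - pY N h0 *m F] h *m pX M h -
       pX N h *m [ffun h0 => F *m pY M h0 - pY N h0 *m F] h) =
  \sum_h ((pX N h *m pY N h - pY N h *m pX N h) *m F -
          F *m (pX M h *m pY M h - pY M h *m pX M h)).
  apply: eq_bigr => h _; rewrite !ffunE.
  have e1 : pY N h *m F *m pX M h = pY N h *m pX N h *m F by rewrite -mulmxA -e mulmxA.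
  have e2 : pX N h *m F *m pY M h = F *m pX M h *m pY M h by rewrite e.
  rewrite ?(mulmxDr, mulmxDl, mulmxN, mulNmx, mulmxA) e1 e2.
  by apply/matrixP => r c; rewrite !mxE; ring.
by rewrite sumrB -mulmx_suml -mulmx_sumr !prel mul0mx mulmx0 subrr.
Qed.

Lemma B1 M N : (ext_coboundaries M N <= ext_cocycles M N)%VS.
Proof.
apply/subvP => x /memv_imgP [F hF ->]; rewrite (lfunE' (lin_cob M N)) E1 memv_cap.
move/memvdiag: hF => hF; apply/andP; split.
  by apply/memS1; split => h /=; rewrite ffunE; [apply: cobX_supp | apply: cobY_supp].
by rewrite memv_ker (lfunE' (lin_relm M N)) rel_cob.
Qed.

Lemma B2 M N : (imT M N <= HomTau M N)%VS.
Proof.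
apply/subvP => x /memv_imgP [F hF ->]; rewrite (lfunE' (lin_Tmap M N)) E4 memv_cap.
move: hF; rewrite E5 memv_cap memv_ker (lfunE' (lin_hxm M N)) => /andP[/memvdiag hF /eqP hx].
apply/andP; split.
  apply/memS2 => h; rewrite ffunE.
  have -> : F *m pY M h - pY N h *m F = - (pY N h *m F - F *m pY M h) by rewrite opprB.
  by apply: supp_opp; apply: cobY_supp.
by rewrite memv_ker (lfunE' (lin_alpham M N)) alpha_T.
Qed.

Lemma surjE M N : T_surjective M N <-> (\dim (HomTau M N) <= \dim (imT M N))%N.
Proof.
rewrite /T_surjective; split => [h | h]; first exact: dimvS.
have /eqP <- : imT M N == HomTau M N by rewrite eqEdim B2 h.
exact: subvv.
Qed.

Lemma main_eq M N :
  dimExt1 M N = (dimCokerT M N + dimCokerT N M)%N /\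
  (dimExt1 M N = 0%N <-> T_surjective M N /\ T_surjective N M).
Proof.
have z := limg_ker_dim (linfun (relm M N)) (S1 M N); rewrite -E1 in z.
have c1 := limg_ker_dim (linfun (@cob K Q M N)) (vdiag M N).
have c2 := limg_ker_dim (linfun (@cob K Q N M)) (vdiag N M).
have t1 := limg_ker_dim (linfun (@Tmap K Q M N)) (homQ M N).
have t2 := limg_ker_dim (linfun (@Tmap K Q N M)) (homQ N M).
rewrite -E6 in t1; rewrite -E6 in t2.
have a1 := limg_ker_dim (linfun (alpham M N)) (S2 M N); rewrite -E4 in a1.
have a2 := limg_ker_dim (linfun (alpham N M)) (S2 N M); rewrite -E4 in a2.
have x1 := limg_ker_dim (linfun (hxm M N)) (vdiag M N); rewrite -E5 in x1.
have x2 := limg_ker_dim (linfun (hxm N M)) (vdiag N M); rewrite -E5 in x2.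
have r1 := dimA1 M N.
have q1 := dimA2 M N.
have q2 := dimA2 N M.
have s1 := E7 M N.
have b1 := dimvS (B1 M N).
have b2 := dimvS (B2 M N).
have b3 := dimvS (B2 N M).
rewrite !surjE /dimExt1 /dimCokerT /ext_coboundaries /imT in r1 b1 b2 b3 c1 c2 t1 t2 *.
move: z c1 c2 t1 t2 a1 a2 x1 x2 r1 q1 q2 s1 b1 b2 b3.
set D1 := \dim (ext_cocycles M N).
set D2 := \dim (linfun (relm M N) @: S1 M N)%VS.
set D3 := \dim (S1 M N).
set D4 := \dim (vdiag M N :&: lker (linfun (@cob K Q M N)))%VS.
set D5 := \dim (linfun (@cob K Q M N) @: vdiag M N)%VS.
set D6 := \dim (vdiag M N).
set D7 := \dim (vdiag N M :&: lker (linfun (@cob K Q N M)))%VS.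
set D8 := \dim (linfun (@cob K Q N M) @: vdiag N M)%VS.
set D9 := \dim (vdiag N M).
set D10 := \dim (linfun (@Tmap K Q M N) @: homQ M N)%VS.
set D11 := \dim (homQ M N).
set D12 := \dim (linfun (@Tmap K Q N M) @: homQ N M)%VS.
set D13 := \dim (homQ N M).
set D14 := \dim (HomTau M N).
set D15 := \dim (linfun (alpham M N) @: S2 M N)%VS.
set D16 := \dim (S2 M N).
set D17 := \dim (HomTau N M).
set D18 := \dim (linfun (alpham N M) @: S2 N M)%VS.
set D19 := \dim (S2 N M).
set D20 := \dim (linfun (hxm M N) @: vdiag M N)%VS.
set D21 := \dim (linfun (hxm N M) @: vdiag N M)%VS.
move=> *; split; first lia.
split; [move=> ?; split; lia | case=> *; lia].
Qed.

End Conc.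

Theorem corollary9p1 (K : closedFieldType) (Q : quiver)
  (hQ : no_oriented_cycles Q) (hL : no_loops Q) (M N : PiMod K Q) :
  dimExt1 M N = (dimCokerT M N + dimCokerT N M)%N /\
  (dimExt1 M N = 0%N <-> T_surjective M N /\ T_surjective N M).
Proof. exact: main_eq. Qed.
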